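(* Let $G$ be a finite connected graph with a real structure and let $G'$ be a connected component of $G(\mathbb R)$. Then $\deg(K_G|_{G'})=\sum_{v\in V(G')}K_G(v)$ is even, where $K_G=\sum_{v\in V(G)}(\operatorname{val}(v)-2)v$.
   Context: A finite graph $G$ has vertex set $V(G)$, edge set $E(G)$ and incidence function $\psi$ assigning to each edge a set of one or two vertices (loops and multiple edges allowed). $\operatorname{val}(v)$ denotes the valence (degree) of $v$ in $G$: the number of edges incident to $v$, each loop at $v$ counted twice. A real structure on $G$ is a pair of involutions of $V(G)$ and $E(G)$, written $v\mapsto\overline v$, $e\mapsto\overline e$, with $\psi(\overline e)=\overline{\psi(e)}$. A vertex/edge is real if fixed; a real edge is non-isolated if all its ends are real vertices. $G(\mathbb R)$ is the subgraph whose vertices are the real vertices and whose edges are the non-isolated real edges. *)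

(* Defs.v *)
From mathcomp Require Import all_boot all_order all_algebra.
Set Implicit Arguments. Unset Strict Implicit. Unset Printing Implicit Defensive.

(* A finite graph (loops and multiple edges allowed): finite vertex type V,
   finite edge type E, incidence psi : E -> {set V}, each edge having one or
   two ends. *)
Definition is_graph (V E : finType) (psi : E -> {set V}) : Prop :=
  forall e : E, 0 < #|psi e| <= 2.

Definition valence (V E : finType) (psi : E -> {set V}) (v : V) : nat :=
  \sum_(e : E | v \in psi e) (if #|psi e| == 1 then 2 else 1).

Definition adj (V E : finType) (psi : E -> {set V}) : rel V :=
  fun u w => [exists e : E, psi e == [set u; w]].

Definition connected_graph (V E : finType) (psi : E -> {set V}) : Prop :=
  forall u w : V, connect (adj psi) u w.

Definition real_structure (V E : finType) (psi : E -> {set V})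
  (sv : V -> V) (se : E -> E) : Prop :=
  involutive sv /\ involutive se /\ forall e, psi (se e) = sv @: psi e.

Definition real_vertex (V : finType) (sv : V -> V) (v : V) : bool := sv v == v.

Definition real_edge (V E : finType) (psi : E -> {set V})
  (sv : V -> V) (se : E -> E) (e : E) : bool :=
  (se e == e) && [forall v in psi e, real_vertex sv v].

(* Adjacency in G(R): vertices are real vertices, edges are non-isolated real
   edges. *)
Definition adjR (V E : finType) (psi : E -> {set V})
  (sv : V -> V) (se : E -> E) : rel V :=
  fun u w => [&& real_vertex sv u, real_vertex sv w &
              [exists e : E, real_edge psi sv se e && (psi e == [set u; w])]].

Definition real_component (V E : finType) (psi : E -> {set V})
  (sv : V -> V) (se : E -> E) (v0 : V) : {set V} :=
  [set w | real_vertex sv w & connect (adjR psi sv se) v0 w].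

(* Main.v *)
Require Import Defs.
From mathcomp Require Import all_boot all_order all_algebra.

Lemma invol_even (T : finType) (f : T -> T) (S : {set T}) :
  involutive f -> (forall x, x \in S -> f x \in S) ->
  (forall x, x \in S -> f x != x) -> 2 %| #|S|.
Proof.
move=> fK fS ffix.
set P := [set x | (enum_rank x < enum_rank (f x))%N].
have finj : injective f := can_inj fK.
have H : f @: (S :&: P) = S :\: P.
  apply/eqP; rewrite eqEsubset; apply/andP; split; apply/subsetP => y.
    case/imsetP => x; rewrite !inE => /andP [xS xP] ->.
    rewrite fS // andbT fK; apply/negP => h.
    by have := ltn_trans h xP; rewrite ltnn.
  rewrite !inE => /andP [yP yS]; apply/imsetP; exists (f y); last by rewrite fK.
  rewrite !inE fS //= fK ltn_neqAle.
  rewrite leqNgt yP andbT.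
  apply/negP => /eqP /val_inj /enum_rank_inj E.
  by move: (ffix y yS); rewrite E eqxx.
rewrite -(cardsID P S) -H card_imset // addnn.
by rewrite dvdn2 odd_double.
Qed.

Lemma even_val (V E : finType) (psi : E -> {set V})
  (sv : V -> V) (se : E -> E)
  (HG : is_graph psi)
  (Hreal : real_structure psi sv se)
  (v0 : V) :
  2 %| \sum_(v in real_component psi sv se v0) valence psi v.
Proof.
case: Hreal => svK [seK Hpsi].
set C := real_component psi sv se v0.
have Creal : forall x, x \in C -> sv x = x.
  by move=> x; rewrite inE => /andP [/eqP -> _].
set w := fun e => if #|psi e| == 1 then 2 else 1.
have A : \sum_(v in C) valence psi v = \sum_e w e * #|C :&: psi e|.
  rewrite /valence (exchange_big_dep predT) //=.
  apply: eq_bigr => e _.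
  rewrite sum_nat_cond_const mulnC; congr (_ * _).
set S := [set e | (#|psi e| == 2) && (#|C :&: psi e| == 1)].
have svinj : injective sv := can_inj svK.
have CI : forall e, C :&: psi (se e) = sv @: (C :&: psi e).
  move=> e; rewrite Hpsi imsetI; last by move=> x y _ _; apply: svinj.
  congr (_ :&: _); rewrite -{1}(imset_id C); apply: eq_in_imset => x xC.
  by rewrite Creal.
have fS : forall e, e \in S -> se e \in S.
  move=> e; rewrite !inE CI Hpsi !card_imset //.
have ffix : forall e, e \in S -> se e != e.
  move=> e; rewrite inE => /andP [c2 c1]; apply/negP => /eqP see.
  have [u uCe] : exists u, u \in C :&: psi e.
    case/cards1P: c1 => u Hu; exists u; by rewrite Hu set11.
  have [x xe xC] : exists2 x, x \in psi e & x \notin C.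
    apply/subsetPn; apply/negP => sub.
    by move: c2 c1; rewrite (setIidPr sub) => /eqP ->.
  move: uCe; rewrite inE => /andP [uC ue].
  have ux : u != x by apply/eqP => E1; move: xC; rewrite -E1 uC.
  have pe : psi e = [set u; x].
    apply/esym/eqP; rewrite eqEcard (eqP c2) cards2 ux andbT.
    by apply/subsetP => y; rewrite !inE => /orP [] /eqP ->.
  have svx : sv x = x.
    have : sv x \in psi e by rewrite -see Hpsi imset_f.
    rewrite pe !inE => /orP [] /eqP // E1.
    by move: ux; rewrite -(svK x) E1 Creal // eqxx.
  have realu : real_vertex sv u by rewrite /real_vertex Creal.
  have realx : real_vertex sv x by rewrite /real_vertex svx.
  have adjux : adjR psi sv se u x.
    rewrite /adjR realu realx /=; apply/existsP; exists e.
    rewrite pe eqxx andbT /real_edge see eqxx /=.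
    apply/forall_inP => y; rewrite pe !inE => /orP [] /eqP -> //.
  move: xC; rewrite /C /real_component inE realx /=; move: uC; rewrite /C /real_component inE => /andP [_ cu].
  by rewrite (connect_trans cu (connect1 adjux)).
have HS := @invol_even _ _ _ seK fS ffix.
rewrite A (bigID (fun e => e \in S)) /=; apply: dvdn_add.
  rewrite (eq_bigr (fun _ => 1)); first by rewrite sum1_card.
  by move=> e; rewrite inE => /andP [/eqP c2 /eqP c1]; rewrite /w c1 c2.
apply: dvdn_sum => e; rewrite inE negb_and /w.
have := HG e; have := subset_leq_card (subsetIr C (psi e)).
move: #|C :&: psi e| #|psi e| => k n.
by case: n => [|[|[|n]]] //; case: k => [|[|[|k]]].
Qed.

Import GRing.Theory.
Local Open Scope ring_scope.

Theorem proposition2 (V E : finType) (psi : E -> {set V})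
  (sv : V -> V) (se : E -> E)
  (HG : is_graph psi) (Hconn : connected_graph psi)
  (Hreal : real_structure psi sv se)
  (v0 : V) (Hv0 : real_vertex sv v0) :
  (2 %| \sum_(v in real_component psi sv se v0) ((valence psi v)%:Z - 2))%Z.
Proof.
have H := @even_val V E psi sv se HG Hreal v0.
rewrite big_split /=.
rewrite -(big_morph Posz PoszD (erefl (Posz 0))).
apply: rpredD; first exact: H.
by apply: rpred_sum => v _.
Qed.
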